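(* Let $g:E^2\times E^2\to\mathbb R$ and let integers $i,\delta_1,\delta_2\ge0$ satisfy $i\le\delta_1$ and $\delta_2\ge\delta_1-i$. Let $(Z_n)_{n\ge0}$ be a stationary Markov chain with transition matrix $Q$, independent of $(X_n,Y_n)_{n\ge0}$, and write $\mathcal X=(X_n)_{n\ge0}$, $\mathcal Y=(Y_n)_{n\ge0}$, $\mathcal Z=(Z_n)_{n\ge0}$ and, for $T\ge1$, $\mathcal Y^T=(Y_{n+T})_{n\ge0}$. Then $$\mathbb E(\mathcal L^g(\mathcal X,\mathcal Y,\mathcal Z))=1,$$ and there is a constant $\rho>0$, not depending on $i,\delta_1,\delta_2,T$, such that $\mathbb E(\mathcal L^g(\mathcal X,\mathcal Y,\mathcal Y^T))\le\rho$ whenever $T\ge1$ and $i+T\ge\delta_1+1$.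
   Context: Let $E$ be a finite set and $P,Q$ irreducible aperiodic stochastic $E\times E$ matrices. Under $\mathbb P$, $(X_n)_{n\ge0}$ and $(Y_n)_{n\ge0}$ are independent stationary Markov chains with transition matrices $P$ and $Q$. For $g:E^2\times E^2\to\mathbb R$ let $\Phi_0(g)_{(x,y),(x',y')}=\exp(g(x,y,x',y'))P_{x,x'}Q_{y,y'}$ with spectral radius $\varphi_0(g)$ and positive right eigenvector $r^g_0$, and let $\Phi_1(g)_{(x,y,z),(x',y',z')}=\exp(g(x,y,x',y')+g(x,z,x',z'))P_{x,x'}Q_{y,y'}Q_{z,z'}$ with spectral radius $\varphi_1(g)$ and positive right eigenvector $r^g_1$. For sequences $(x_k)_{k\ge0},(y_k)_{k\ge0},(z_k)_{k\ge0}$ in $E$ put $\sigma_1=\sum_{k=1}^{i}g(x_{k-1},y_{k-1},x_k,y_k)$, $\sigma_2=\sum_{k=i+1}^{\delta_1}[g(x_{k-1},y_{k-1},x_k,y_k)+g(x_{k-1},z_{k-1},x_k,z_k)]$, $\sigma_3=\sum_{k=\delta_1+1}^{i+\delta_2}g(x_{k-1},z_{k-1},x_k,z_k)$, and $$\mathcal L^g=\frac{r^g_0(x_i,y_i)e^{\sigma_1}}{r^g_0(x_0,y_0)\varphi_0(g)^i}\cdot\frac{r^g_1(x_{\delta_1},y_{\delta_1},z_{\delta_1})e^{\sigma_2}}{r^g_1(x_i,y_i,z_i)\varphi_1(g)^{\delta_1-i}}\cdot\frac{r^g_0(x_{i+\delta_2},z_{i+\delta_2})e^{\sigma_3}}{r^g_0(x_{\delta_1},z_{\delta_1})\varphi_0(g)^{i+\delta_2-\delta_1}}.$$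 *)

(* Defs.v *)
From HB Require Import structures.
From mathcomp Require Import all_boot all_order all_algebra.
From mathcomp Require Import reals sequences exp.
From mathcomp Require Import complex.

Set Implicit Arguments.
Unset Strict Implicit.
Unset Printing Implicit Defensive.

Import Order.TTheory GRing.Theory Num.Theory.
Local Open Scope ring_scope.

Section Defs.
Variable R : realType.

Fixpoint mpow (T : finType) (A : T -> T -> R) (n : nat) : T -> T -> R :=
  match n with
  | 0 => fun s t => if s == t then 1 else 0
  | n'.+1 => fun s t => \sum_(u : T) mpow A n' s u * A u t
  end.

Definition stochastic (T : finType) (A : T -> T -> R) : Prop :=
  (forall s t, 0 <= A s t) /\ (forall s, \sum_(t : T) A s t = 1).

Definition irreducible (T : finType) (A : T -> T -> R) : Prop :=
  forall s t, exists2 n : nat, (0 < n)%N & 0 < mpow A n s t.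

Definition aperiodic (T : finType) (A : T -> T -> R) : Prop :=
  forall (s : T) (d : nat),
    (forall n : nat, (0 < n)%N -> 0 < mpow A n s s -> (d %| n)%N) -> d = 1%N.

Definition stationary_distr (T : finType) (mu : T -> R) (A : T -> T -> R) : Prop :=
  [/\ forall s, 0 <= mu s, \sum_(s : T) mu s = 1
    & forall t, \sum_(s : T) mu s * A s t = mu t].

Definition eigenvalue (T : finType) (A : T -> T -> R) (l : R[i]) : Prop :=
  exists v : T -> R[i], (exists t, v t != 0) /\
    forall s, \sum_(t : T) ((A s t)%:C)%C * v t = l * v s.

Definition is_spectral_radius (T : finType) (A : T -> T -> R) (rho : R) : Prop :=
  (exists2 l, eigenvalue A l & `|l| = (rho%:C)%C) /\
  (forall l, eigenvalue A l -> `|l| <= (rho%:C)%C).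

Definition pos_right_eigvec (T : finType) (A : T -> T -> R) (rho : R) (r : T -> R) : Prop :=
  (forall s, 0 < r s) /\ (forall s, \sum_(t : T) A s t * r t = rho * r s).

Variable E : finType.

Definition Phi0 (P Q : E -> E -> R) (g : E -> E -> E -> E -> R)
    (s t : E * E) : R :=
  expR (g s.1 s.2 t.1 t.2) * P s.1 t.1 * Q s.2 t.2.

Definition Phi1 (P Q : E -> E -> R) (g : E -> E -> E -> E -> R)
    (s t : E * E * E) : R :=
  expR (g s.1.1 s.1.2 t.1.1 t.1.2 + g s.1.1 s.2 t.1.1 t.2)
    * P s.1.1 t.1.1 * Q s.1.2 t.1.2 * Q s.2 t.2.

Definition Lg (g : E -> E -> E -> E -> R) (phi0 phi1 : R)
    (r0 : E * E -> R) (r1 : E * E * E -> R) (i d1 d2 : nat)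
    (x y z : nat -> E) : R :=
  let sigma1 := \sum_(1 <= k < i.+1) g (x k.-1) (y k.-1) (x k) (y k) in
  let sigma2 := \sum_(i.+1 <= k < d1.+1)
      (g (x k.-1) (y k.-1) (x k) (y k) + g (x k.-1) (z k.-1) (x k) (z k)) in
  let sigma3 := \sum_(d1.+1 <= k < (i + d2).+1) g (x k.-1) (z k.-1) (x k) (z k) in
  (r0 (x i, y i) * expR sigma1 / (r0 (x 0%N, y 0%N) * phi0 ^+ i))
  * (r1 (x d1, y d1, z d1) * expR sigma2 / (r1 (x i, y i, z i) * phi1 ^+ (d1 - i)))
  * (r0 (x (i + d2)%N, z (i + d2)%N) * expR sigma3
       / (r0 (x d1, z d1) * phi0 ^+ (i + d2 - d1))).

Definition path_prob (mu : E -> R) (A : E -> E -> R) (N : nat) (x : nat -> E) : R :=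
  mu (x 0%N) * \prod_(k < N) A (x k) (x k.+1).

(* a finite path 0..N, extended to a sequence (the extension beyond N is
   irrelevant for functionals depending only on coordinates <= N) *)
Definition ext (N : nat) (f : {ffun 'I_N.+1 -> E}) : nat -> E :=
  fun n => f (inord n).

(* E F(X, Y) for independent Markov chains X ~ (muX, A), Y ~ (muY, B),
   for F depending only on the coordinates 0..N *)
Definition expect2 (N : nat) (muX : E -> R) (A : E -> E -> R)
    (muY : E -> R) (B : E -> E -> R) (F : (nat -> E) -> (nat -> E) -> R) : R :=
  \sum_(x : {ffun 'I_N.+1 -> E}) \sum_(y : {ffun 'I_N.+1 -> E})
     path_prob muX A N (ext x) * path_prob muY B N (ext y) * F (ext x) (ext y).

(* E F(X, Y, Z) for independent Markov chains, F depending on coordinates 0..N *)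
Definition expect3 (N : nat) (muX : E -> R) (A : E -> E -> R)
    (muY : E -> R) (B : E -> E -> R) (muZ : E -> R) (C : E -> E -> R)
    (F : (nat -> E) -> (nat -> E) -> (nat -> E) -> R) : R :=
  \sum_(x : {ffun 'I_N.+1 -> E}) \sum_(y : {ffun 'I_N.+1 -> E})
   \sum_(z : {ffun 'I_N.+1 -> E})
     path_prob muX A N (ext x) * path_prob muY B N (ext y)
       * path_prob muZ C N (ext z) * F (ext x) (ext y) (ext z).

Definition shift (T : nat) (y : nat -> E) : nat -> E := fun n => y (n + T)%N.

End Defs.

(* Main.v *)
Require Import Defs.
From HB Require Import structures.
From mathcomp Require Import all_boot all_order all_algebra.
From mathcomp Require Import reals sequences exp.
From mathcomp Require Import complex.
From mathcomp Require Import ring zify.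
From Stdlib Require Import FunctionalExtensionality.
Import Order.TTheory GRing.Theory Num.Theory.
Local Open Scope ring_scope.

Set Implicit Arguments.
Unset Strict Implicit.
Unset Printing Implicit Defensive.

Section Infra.
Variable R : realType.
Variable E : finType.

Definition upd (x : nat -> E) (n : nat) (e : E) : nat -> E :=
  fun k => if k == n then e else x k.

Lemma val_inord n k : val (inord k : 'I_n.+1) = if (k < n.+1)%N then k else 0%N.
Proof.
rewrite /inord /insubd; case: insubP => [u -> /= ->|/negbTE ->] //.
Qed.

Definition build N (p : {ffun 'I_N.+1 -> E} * E) : {ffun 'I_N.+2 -> E} :=
  [ffun j : 'I_N.+2 => if (j : nat) == N.+1 then p.2 else p.1 (inord j)].

Definition unbuild N (f : {ffun 'I_N.+2 -> E}) : {ffun 'I_N.+1 -> E} * E :=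
  ([ffun j : 'I_N.+1 => f (widen_ord (leqnSn _) j)], f ord_max).

Lemma ext_build N (p : {ffun 'I_N.+1 -> E} * E) :
  ext (build p) = upd (ext p.1) N.+1 p.2.
Proof.
apply: functional_extensionality => k; rewrite /ext /build /upd ffunE val_inord.
case: ltnP => hk.
  by [].

have -> : (k == N.+1) = false by apply/eqP => e; rewrite e ltnn in hk.
case: eqP => // _; congr (p.1 _); apply: val_inj; rewrite !val_inord /=.
by rewrite ltnNge (leq_trans _ hk).
Qed.

Lemma build_bij N : bijective (@build N).
Proof.
exists (@unbuild N).
  case=> f e; rewrite /unbuild /build /=; congr pair.
    apply/ffunP => j; rewrite !ffunE /= ltn_eqF ?(ltn_ord j) //.
    congr (f _); apply: val_inj; rewrite val_inord /=.
    by rewrite (leq_trans (ltn_ord j)).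
  by rewrite ffunE /= eqxx.
move=> f; rewrite /unbuild /build; apply/ffunP => j; rewrite ffunE /=.
case: eqP => hj.
  by congr (f _); apply: val_inj; rewrite /= hj.
rewrite ffunE; congr (f _); apply: val_inj; rewrite /= val_inord.
have := ltn_ord j; rewrite ltnS leq_eqVlt => /orP[/eqP //|->] //.
Qed.

Lemma peel N (F : (nat -> E) -> R) :
  \sum_(f : {ffun 'I_N.+2 -> E}) F (ext f) =
  \sum_(f : {ffun 'I_N.+1 -> E}) \sum_(e : E) F (upd (ext f) N.+1 e).
Proof.
rewrite pair_big /= (reindex (@build N)) /=; last first.
  by apply: onW_bij; apply: build_bij.
by apply: eq_bigr => p _; rewrite ext_build.
Qed.

Lemma sum_ffun1 (F : (nat -> E) -> R) :
  \sum_(f : {ffun 'I_1 -> E}) F (ext f) = \sum_(e : E) F (fun _ => e).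
Proof.
rewrite (reindex (fun e : E => [ffun _ : 'I_1 => e])) /=; last first.
  apply: onW_bij; exists (fun f : {ffun 'I_1 -> E} => f ord0).
    by move=> e; rewrite ffunE.
  by move=> f; apply/ffunP => j; rewrite ffunE (ord1 j).
apply: eq_bigr => e _; congr F; apply: functional_extensionality => k.
by rewrite /ext ffunE.
Qed.

Lemma pp_upd (mu : E -> R) (A : E -> E -> R) N (x : nat -> E) e :
  path_prob mu A N.+1 (upd x N.+1 e) = path_prob mu A N x * A (x N) e.
Proof.
rewrite /path_prob big_ord_recr /= mulrA; congr (_ * _ * _).
- apply: eq_bigr => k _ /=; rewrite /upd /=.
  rewrite (@ltn_eqF k N.+1) ?(@ltn_eqF k.+1 N.+1) //.
  + exact: (ltn_ord k).
  + exact: (ltnW (ltn_ord k)).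
- by rewrite /upd eqxx (ltn_eqF (ltnSn N)).
Qed.

Lemma pp_ge0 (mu : E -> R) (A : E -> E -> R) N x :
  (forall e, 0 <= mu e) -> (forall e e', 0 <= A e e') -> 0 <= path_prob mu A N x.
Proof.
move=> h1 h2; rewrite /path_prob mulr_ge0 //; exact: prodr_ge0.
Qed.


Definition loc (n : nat) (H : (nat -> E) -> R) :=
  forall x y, (forall k, (k <= n)%N -> x k = y k) -> H x = H y.

Lemma ext_len (mu : E -> R) (A : E -> E -> R) (hA : forall e, \sum_e' A e e' = 1)
  n H (hH : loc n H) m : (n <= m)%N ->
  \sum_(f : {ffun 'I_m.+1 -> E}) path_prob mu A m (ext f) * H (ext f) =
  \sum_(f : {ffun 'I_n.+1 -> E}) path_prob mu A n (ext f) * H (ext f).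
Proof.
elim: m => [|m IH].
  by rewrite leqn0 => /eqP ->.
rewrite leq_eqVlt => /orP[/eqP -> //|hn].
rewrite (@peel m (fun x => path_prob mu A m.+1 x * H x)) -IH //; apply: eq_bigr => f _.
transitivity (\sum_e path_prob mu A m (ext f) * A (ext f m) e * H (ext f)).
  apply: eq_bigr => e _; rewrite pp_upd; congr (_ * _); apply: hH => k hk.
  by rewrite /upd ltn_eqF // ltnS (leq_trans hk).
by rewrite -big_distrl -big_distrr /= hA mulr1.
Qed.

Lemma mpow_ge0 (A : E -> E -> R) n s t : (forall e e', 0 <= A e e') -> 0 <= mpow A n s t.
Proof.
move=> hA; elim: n s t => [|n IH] s t /=; first by case: eqP.
by apply: sumr_ge0 => u _; apply: mulr_ge0.
Qed.

Lemma mpow_sum1 (A : E -> E -> R) n s : (forall e, \sum_e' A e e' = 1) ->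
  \sum_t mpow A n s t = 1.
Proof.
move=> hA; elim: n s => [|n IH] s /=.
  by rewrite (bigD1 s) //= eqxx big1 ?addr0 // => t /negbTE; rewrite eq_sym => ->.
rewrite exchange_big /= -(IH s); apply: eq_bigr => u _.
by rewrite -big_distrr /= hA mulr1.
Qed.

Lemma mpow_stat (mu : E -> R) (A : E -> E -> R) n t :
  (forall t, \sum_s mu s * A s t = mu t) -> \sum_s mu s * mpow A n s t = mu t.
Proof.
move=> hA; elim: n t => [|n IH] t /=.
  rewrite (bigD1 t) //= eqxx mulr1 big1 ?addr0 // => s /negbTE -> ; exact: mulr0.
rewrite -[RHS]hA; under eq_bigr do rewrite big_distrr /=.
rewrite exchange_big /=; apply: eq_bigr => u _.
by rewrite -IH big_distrl /=; apply: eq_bigr => s _; rewrite mulrA.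
Qed.

Lemma base_split (mu : E -> R) (A : E -> E -> R) a n :
  forall (G : (nat -> E) -> E -> R),
  (forall y y' e, (forall k, (k <= a)%N -> y k = y' k) -> G y e = G y' e) ->
  \sum_(y : {ffun 'I_(n + a).+1 -> E}) path_prob mu A (n + a) (ext y) * G (ext y) (ext y (n + a)) =
  \sum_(u : {ffun 'I_a.+1 -> E}) path_prob mu A a (ext u) *
      \sum_e mpow A n (ext u a) e * G (ext u) e.
Proof.
elim: n => [|n IH] G hG.
  apply: eq_bigr => u _; congr (_ * _) => /=.
  rewrite (bigD1 (ext u a)) //= eqxx mul1r big1 ?addr0 // => e /negbTE.
  by rewrite eq_sym => ->; rewrite mul0r.
pose G' (y : nat -> E) (e' : E) := \sum_e A e' e * G y e.
transitivity (\sum_(y : {ffun 'I_(n + a).+1 -> E})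
   path_prob mu A (n + a) (ext y) * G' (ext y) (ext y (n + a))).
  rewrite (@peel (n + a) (fun x => path_prob mu A (n + a).+1 x * G x (x (n.+1 + a)))).
  apply: eq_bigr => y _; rewrite /G' big_distrr /=.
  apply: eq_bigr => e _; rewrite pp_upd -mulrA; congr (_ * (_ * _)).
  rewrite /upd eqxx; apply: hG => k hk.
  by rewrite ltn_eqF // ltnS (leq_trans hk) // leq_addl.
rewrite IH; last first.
  by move=> y y' e h; rewrite /G'; apply: eq_bigr => e' _; rewrite (hG y y').
apply: eq_bigr => u _; congr (_ * _) => /=; rewrite /G'.
under eq_bigr do rewrite big_distrr /=.
rewrite exchange_big /=; apply: eq_bigr => e _.
by rewrite big_distrl /=; apply: eq_bigr => e' _; rewrite mulrA.
Qed.


Lemma split_lem (mu : E -> R) (A : E -> E -> R) a S : (a < S)%N ->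
  forall m (F : (nat -> E) -> (nat -> E) -> R),
  (forall y y' w, (forall k, (k <= a)%N -> y k = y' k) -> F y w = F y' w) ->
  (forall y w w', (forall k, (k <= m)%N -> w k = w' k) -> F y w = F y w') ->
  \sum_(y : {ffun 'I_(m + S).+1 -> E}) path_prob mu A (m + S) (ext y) * F (ext y) (shift S (ext y)) =
  \sum_(u : {ffun 'I_a.+1 -> E}) path_prob mu A a (ext u) *
    \sum_(w : {ffun 'I_m.+1 -> E})
       path_prob (fun e => mpow A (S - a) (ext u a) e) A m (ext w) * F (ext u) (ext w).
Proof.
move=> haS; have [n hn] : exists n, S = (n + a)%N by exists (S - a)%N; rewrite subnK // ltnW.
subst S; rewrite addnK => m; elim: m => [|m IH] F h1 h2.
  transitivity (\sum_(y : {ffun 'I_(n + a).+1 -> E}) path_prob mu A (n + a) (ext y) *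
      (fun y e => F y (fun _ => e)) (ext y) (ext y (n + a))).
    apply: eq_bigr => y _; congr (_ * _); apply: h2 => k; rewrite leqn0 => /eqP -> /=.
    by [].
  rewrite (@base_split mu A a n (fun y e => F y (fun _ => e))); last by move=> y y' e h; apply: h1.
  apply: eq_bigr => u _; congr (_ * _).
  rewrite (@sum_ffun1 (fun w => path_prob (fun e => mpow A n (ext u a) e) A 0 w * F (ext u) w)).
  by apply: eq_bigr => e _; rewrite /path_prob big_ord0 mulr1.
pose F' (y w : nat -> E) := \sum_e A (w m) e * F y (upd w m.+1 e).
transitivity (\sum_(y : {ffun 'I_(m + (n + a)).+1 -> E})
   path_prob mu A (m + (n + a)) (ext y) * F' (ext y) (shift (n + a) (ext y))).
  rewrite (@peel (m + (n + a)) (fun x => path_prob mu A (m + (n + a)).+1 x * F x (shift (n + a) x))).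
  apply: eq_bigr => y _; rewrite /F' big_distrr /=.
  apply: eq_bigr => e _; rewrite pp_upd -mulrA; congr (_ * (_ * _)).
  rewrite (h1 _ (ext y)); last first.
    move=> k hk; rewrite /upd ltn_eqF // ltnS (leq_trans hk) // (leq_trans (leq_addl n a)) //.
    exact: leq_addl.
  apply: h2 => k _; rewrite /upd /shift -addSn eqn_add2r; by [].
rewrite IH; last first.
- move=> y w w' h; rewrite /F' (h m (leqnn m)); apply: eq_bigr => e _; congr (_ * _); apply: h2.
  move=> k hk; rewrite /upd; case: eqP => // /eqP hkm; apply: h.
  by rewrite -ltnS ltn_neqAle hkm hk.
- by move=> y y' w h; rewrite /F'; apply: eq_bigr => e _; rewrite (h1 y y').
apply: eq_bigr => u _; congr (_ * _).
rewrite (@peel m (fun w => path_prob (fun e => mpow A n (ext u a) e) A m.+1 w * F (ext u) w)).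
apply: eq_bigr => w _; rewrite /F' big_distrr /=; apply: eq_bigr => e _.
by rewrite pp_upd mulrA.
Qed.


Lemma peel3 n (F : (nat -> E) -> (nat -> E) -> (nat -> E) -> R) :
  \sum_(x : {ffun 'I_n.+2 -> E}) \sum_(y : {ffun 'I_n.+2 -> E}) \sum_(z : {ffun 'I_n.+2 -> E})
     F (ext x) (ext y) (ext z) =
  \sum_(x : {ffun 'I_n.+1 -> E}) \sum_(y : {ffun 'I_n.+1 -> E}) \sum_(z : {ffun 'I_n.+1 -> E})
   \sum_a \sum_b \sum_c F (upd (ext x) n.+1 a) (upd (ext y) n.+1 b) (upd (ext z) n.+1 c).
Proof.
rewrite (@peel n (fun x => \sum_(y : {ffun 'I_n.+2 -> E}) \sum_(z : {ffun 'I_n.+2 -> E}) F x (ext y) (ext z))).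
apply: eq_bigr => x _.
under eq_bigr => a _ do rewrite (@peel n (fun y => \sum_(z : {ffun 'I_n.+2 -> E}) F (upd (ext x) n.+1 a) y (ext z))).
rewrite exchange_big /=; apply: eq_bigr => y _.
under eq_bigr => a _ do under eq_bigr => b _ do
  rewrite (@peel n (fun z => F (upd (ext x) n.+1 a) (upd (ext y) n.+1 b) z)).
under eq_bigr => a _ do rewrite exchange_big /=.
by rewrite exchange_big.
Qed.

Definition Pi (h : nat -> E -> E -> E -> E -> E -> E -> R) n (x y z : nat -> E) :=
  \prod_(1 <= k < n.+1) h k (x k.-1) (y k.-1) (z k.-1) (x k) (y k) (z k).

Lemma Pi_upd h n x y z a b c :
  Pi h n.+1 (upd x n.+1 a) (upd y n.+1 b) (upd z n.+1 c) =
  Pi h n x y z * h n.+1 (x n) (y n) (z n) a b c.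
Proof.
rewrite /Pi big_nat_recr //=; congr (_ * _); last first.
  by rewrite /upd eqxx (ltn_eqF (ltnSn n)).
apply: eq_big_nat => k /andP[hk1 hk2].
have h1 : (k == n.+1) = false by rewrite ltn_eqF // ltnW.
have h2 : (k.-1 == n.+1) = false by rewrite ltn_eqF // (leq_ltn_trans (leq_pred k)) // ltnW.
by rewrite /upd h1 h2.
Qed.

Lemma sum1_ext (G : E -> R) : \sum_(f : {ffun 'I_1 -> E}) G (ext f 0%N) = \sum_e G e.
Proof. exact: (@sum_ffun1 (fun x => G (x 0%N))). Qed.

Lemma markov3 (mu1 mu2 mu3 : E -> R) (A1 A2 A3 : E -> E -> R)
  (hm1 : \sum_e mu1 e = 1) (hm2 : \sum_e mu2 e = 1) (hm3 : \sum_e mu3 e = 1)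
  (h : nat -> E -> E -> E -> E -> E -> E -> R)
  (hh : forall k x y z, \sum_a \sum_b \sum_c A1 x a * A2 y b * A3 z c * h k x y z a b c = 1) n :
  \sum_(x : {ffun 'I_n.+1 -> E}) \sum_(y : {ffun 'I_n.+1 -> E}) \sum_(z : {ffun 'I_n.+1 -> E})
    path_prob mu1 A1 n (ext x) * path_prob mu2 A2 n (ext y) * path_prob mu3 A3 n (ext z)
      * Pi h n (ext x) (ext y) (ext z) = 1.
Proof.
elim: n => [|n IH].
  transitivity (\sum_(x : {ffun 'I_1 -> E}) mu1 (ext x 0%N) *
     \sum_(y : {ffun 'I_1 -> E}) mu2 (ext y 0%N) * \sum_(z : {ffun 'I_1 -> E}) mu3 (ext z 0%N)).
    apply: eq_bigr => x _; rewrite big_distrr; apply: eq_bigr => y _ /=.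
    rewrite mulrA big_distrr; apply: eq_bigr => z _ /=.
    rewrite /path_prob /Pi !big_ord0 big_geq //; ring.
  rewrite (sum1_ext mu3) hm3; under eq_bigr do rewrite (sum1_ext (fun e => mu2 e * 1)).
  rewrite (eq_bigr (fun e => mu2 e) (fun e _ => mulr1 _)) hm2.
  by under eq_bigr do rewrite mulr1; rewrite (sum1_ext mu1) hm1.
rewrite (@peel3 n (fun x y z => path_prob mu1 A1 n.+1 x * path_prob mu2 A2 n.+1 y *
    path_prob mu3 A3 n.+1 z * Pi h n.+1 x y z)).
rewrite -[RHS]IH; apply: eq_bigr => x _; apply: eq_bigr => y _; apply: eq_bigr => z _.
set X := ext x; set Y := ext y; set Z := ext z.
transitivity (path_prob mu1 A1 n X * path_prob mu2 A2 n Y * path_prob mu3 A3 n Z * Pi h n X Y Z *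
  \sum_a \sum_b \sum_c A1 (X n) a * A2 (Y n) b * A3 (Z n) c * h n.+1 (X n) (Y n) (Z n) a b c);
  last by rewrite hh mulr1.
rewrite big_distrr; apply: eq_bigr => a _ /=; rewrite big_distrr; apply: eq_bigr => b _ /=.
rewrite big_distrr; apply: eq_bigr => c _ /=.
rewrite !pp_upd Pi_upd; ring.
Qed.


Lemma exists_pos (f : E -> R) : (forall e, 0 <= f e) -> \sum_e f e = 1 -> exists e, 0 < f e.
Proof.
move=> h0 h1; case: (boolP [exists e, 0 < f e]) => [/existsP //|/existsPn h].
have : \sum_e f e = 0.
  apply: big1 => e _; apply/eqP; rewrite eq_le h0 andbT; move: (h e).
  by rewrite lt_neqAle h0 andbT negbK eq_sym => /eqP ->.
by rewrite h1 => /eqP; rewrite oner_eq0.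
Qed.

Lemma tele (f c r : nat -> R) (p : R) a b : (a <= b)%N -> (forall k, r k != 0) -> p != 0 ->
  (forall k, (a < k <= b)%N -> f k = expR (c k) * r k / (r k.-1 * p)) ->
  \prod_(a.+1 <= k < b.+1) f k =
  r b * expR (\sum_(a.+1 <= k < b.+1) c k) / (r a * p ^+ (b - a)).
Proof.
move=> hab hr hp hf; elim: b hab hf => [|b IH] hab hf.
  move: hab; rewrite leqn0 => /eqP ->.
  by rewrite !big_geq // expR0 expr0 mulr1 divff.
move: hab; rewrite leq_eqVlt => /orP[/eqP ->|hab].
  by rewrite !big_geq // expR0 subnn expr0 mulr1 divff.
rewrite big_nat_recr //= IH //; last by move=> k /andP[h1 h2]; apply: hf; rewrite h1 ltnW.
rewrite (@big_nat_recr _ _ _ b.+1 a.+1) //=.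
rewrite hf ?hab ?leqnn // expRD subSn // exprS /=.
have := hr b; have := hr a; have := hr b.+1; move=> h1 h2 h3.
field; rewrite h2 h3 hp /= expf_neq0 //.
Qed.

End Infra.

Section Part1.
Variables (R : realType) (E : finType).
Variables (P Q : E -> E -> R) (g : E -> E -> E -> E -> R) (phi0 phi1 : R)
  (r0 : E * E -> R) (r1 : E * E * E -> R).
Hypotheses (hP : stochastic P) (hQ : stochastic Q)
  (hr0 : pos_right_eigvec (Phi0 P Q g) phi0 r0)
  (hr1 : pos_right_eigvec (Phi1 P Q g) phi1 r1).
Variable e0 : E.
Variables (i d1 d2 : nat).

Lemma phi0_gt0 : 0 < phi0.
Proof.
have [a ha] := exists_pos (hP.1 e0) (hP.2 e0).
have [b hb] := exists_pos (hQ.1 e0) (hQ.2 e0).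
have := hr0.2 (e0, e0); rewrite (bigD1 (a, b)) //= => heq.
have : 0 < phi0 * r0 (e0, e0).
  rewrite -heq ltr_wpDr //; first by apply: sumr_ge0 => t _; rewrite /Phi0 !mulr_ge0 ?expR_ge0 ?hP.1 ?hQ.1 // ltW // hr0.1.
  by rewrite /Phi0 /= !mulr_gt0 ?expR_gt0 // hr0.1.
by rewrite pmulr_lgt0 // hr0.1.
Qed.

Lemma phi1_gt0 : 0 < phi1.
Proof.
have [a ha] := exists_pos (hP.1 e0) (hP.2 e0).
have [b hb] := exists_pos (hQ.1 e0) (hQ.2 e0).
have := hr1.2 (e0, e0, e0); rewrite (bigD1 (a, b, b)) //= => heq.
have : 0 < phi1 * r1 (e0, e0, e0).
  rewrite -heq ltr_wpDr //; first by apply: sumr_ge0 => t _; rewrite /Phi1 !mulr_ge0 ?expR_ge0 ?hP.1 ?hQ.1 // ltW // hr1.1.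
  by rewrite /Phi1 /= !mulr_gt0 ?expR_gt0 // hr1.1.
by rewrite pmulr_lgt0 // hr1.1.
Qed.

Definition hh k (x y z x' y' z' : E) : R :=
  if (k <= i)%N then expR (g x y x' y') * r0 (x', y') / (r0 (x, y) * phi0)
  else if (k <= d1)%N then expR (g x y x' y' + g x z x' z') * r1 (x', y', z') / (r1 (x, y, z) * phi1)
  else if (k <= i + d2)%N then expR (g x z x' z') * r0 (x', z') / (r0 (x, z) * phi0)
  else 1.


Lemma r0_neq0 s : r0 s != 0. Proof. by rewrite gt_eqF // hr0.1. Qed.
Lemma r1_neq0 s : r1 s != 0. Proof. by rewrite gt_eqF // hr1.1. Qed.

Lemma hh_sum k x y z :
  \sum_a \sum_b \sum_c P x a * Q y b * Q z c * hh k x y z a b c = 1.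
Proof.
have hp0 := phi0_gt0; have hp1 := phi1_gt0.
rewrite /hh; case: (boolP (k <= i)%N) => hk1;
  [|move/negbTE: hk1 => hk1; case: (boolP (k <= d1)%N) => hk2;
    [|move/negbTE: hk2 => hk2; case: (boolP (k <= i + d2)%N) => hk3; [|move/negbTE: hk3 => hk3]]];
  rewrite ?hk1 ?hk2 ?hk3 /=.
- transitivity (\sum_(t : E * E) Phi0 P Q g (x, y) t * r0 t / (r0 (x, y) * phi0)).
    transitivity (\sum_a \sum_b P x a * Q y b * (expR (g x y a b) * r0 (a, b) / (r0 (x, y) * phi0))).
      apply: eq_bigr => a _; apply: eq_bigr => b _.
      transitivity (P x a * Q y b * (expR (g x y a b) * r0 (a, b) / (r0 (x, y) * phi0)) * \sum_c Q z c);
        last by rewrite (hQ.2 z) mulr1.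
      by rewrite big_distrr; apply: eq_bigr => c _ /=; ring.
    by rewrite pair_big /=; apply: eq_bigr => [[a b]] _; rewrite /Phi0 /=; ring.
  rewrite -big_distrl /= (hr0.2 (x, y)) [phi0 * _]mulrC divff // mulf_neq0 ?r0_neq0 // gt_eqF //.
- transitivity (\sum_(t : E * E * E) Phi1 P Q g (x, y, z) t * r1 t / (r1 (x, y, z) * phi1)).
    rewrite !pair_big /=; apply: eq_bigr => [[[a b] c]] _; rewrite /Phi1 /=; ring.
  rewrite -big_distrl /= (hr1.2 (x, y, z)) [phi1 * _]mulrC divff // mulf_neq0 ?r1_neq0 // gt_eqF //.
- transitivity (\sum_(t : E * E) Phi0 P Q g (x, z) t * r0 t / (r0 (x, z) * phi0)).
    transitivity (\sum_a \sum_c P x a * Q z c * (expR (g x z a c) * r0 (a, c) / (r0 (x, z) * phi0))).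
      apply: eq_bigr => a _; rewrite exchange_big /=; apply: eq_bigr => c _.
      transitivity (P x a * Q z c * (expR (g x z a c) * r0 (a, c) / (r0 (x, z) * phi0)) * \sum_b Q y b);
        last by rewrite (hQ.2 y) mulr1.
      by rewrite big_distrr; apply: eq_bigr => b _ /=; ring.
    by rewrite pair_big /=; apply: eq_bigr => [[a c]] _; rewrite /Phi0 /=; ring.
  rewrite -big_distrl /= (hr0.2 (x, z)) [phi0 * _]mulrC divff // mulf_neq0 ?r0_neq0 // gt_eqF //.
- transitivity (\sum_a P x a); last exact: (hP.2 x).
  apply: eq_bigr => a _.
  transitivity (P x a * \sum_b Q y b); last by rewrite (hQ.2 y) mulr1.
  rewrite big_distrr; apply: eq_bigr => b _ /=.
  transitivity (P x a * Q y b * \sum_c Q z c); last by rewrite (hQ.2 z) mulr1.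
  by rewrite big_distrr; apply: eq_bigr => c _ /=; ring.
Qed.


Lemma Lg_eq N (x y z : nat -> E) : (i <= d1)%N -> (d1 - i <= d2)%N -> (i + d2 <= N)%N ->
  Lg g phi0 phi1 r0 r1 i d1 d2 x y z = Pi hh N x y z.
Proof.
move=> h1 h2 h3.
have hd : (d1 <= i + d2)%N by rewrite -leq_subLR.
have hp0 := phi0_gt0; have hp1 := phi1_gt0.
rewrite /Pi (@big_cat_nat _ _ _ (i + d2).+1) //=.
rewrite (@big_cat_nat _ _ _ d1.+1 1 (i + d2).+1) //= (@big_cat_nat _ _ _ i.+1 1 d1.+1) //=.
rewrite (@tele _ _ (fun k => g (x k.-1) (y k.-1) (x k) (y k)) (fun k => r0 (x k, y k)) phi0 0 i) //=;
  last 3 first.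
- by move=> k; apply: r0_neq0.
- by rewrite gt_eqF.
- by move=> k /andP[_ hk]; rewrite /hh hk.
rewrite (@tele _ _ (fun k => g (x k.-1) (y k.-1) (x k) (y k) + g (x k.-1) (z k.-1) (x k) (z k))
   (fun k => r1 (x k, y k, z k)) phi1 i d1) //=; last 3 first.
- by move=> k; apply: r1_neq0.
- by rewrite gt_eqF.
- by move=> k /andP[hk1 hk]; rewrite /hh hk (leqNgt k i) hk1.
rewrite (@tele _ _ (fun k => g (x k.-1) (z k.-1) (x k) (z k))
   (fun k => r0 (x k, z k)) phi0 d1 (i + d2)) //=; last 3 first.
- by move=> k; apply: r0_neq0.
- by rewrite gt_eqF.
- move=> k /andP[hk1 hk]; rewrite /hh hk (leqNgt k d1) hk1 (leqNgt k i).
  by rewrite (leq_ltn_trans h1 hk1).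
rewrite [X in _ = _ * X]big1_seq ?mulr1 ?subn0 //.
move=> k /andP[_]; rewrite mem_index_iota => /andP[hk _].
have a3 : (k <= i + d2)%N = false by apply: negbTE; rewrite -ltnNge.
have a2 : (k <= d1)%N = false by apply: negbTE; rewrite -ltnNge (leq_ltn_trans hd hk).
have a1 : (k <= i)%N = false.
  by apply: negbTE; rewrite -ltnNge (leq_ltn_trans (leq_trans h1 hd) hk).
by rewrite /hh a1 a2 a3.
Qed.

Lemma Lg_ge0 (x y z : nat -> E) : 0 <= Lg g phi0 phi1 r0 r1 i d1 d2 x y z.
Proof.
have hp0 := ltW phi0_gt0; have hp1 := ltW phi1_gt0.
have h0 s := ltW (hr0.1 s); have h1 s := ltW (hr1.1 s).
rewrite /Lg /=.
by rewrite !mulr_ge0 ?invr_ge0 ?mulr_ge0 ?expR_ge0 ?exprn_ge0.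
Qed.

Lemma Lg_locY (x y y' z : nat -> E) : (i <= d1)%N ->
  (forall k, (k <= d1)%N -> y k = y' k) ->
  Lg g phi0 phi1 r0 r1 i d1 d2 x y z = Lg g phi0 phi1 r0 r1 i d1 d2 x y' z.
Proof.
move=> hid h; rewrite /Lg /=.
have S1 : \sum_(1 <= k < i.+1) g (x k.-1) (y k.-1) (x k) (y k) =
          \sum_(1 <= k < i.+1) g (x k.-1) (y' k.-1) (x k) (y' k).
  apply: eq_big_nat => k /andP[_ hk]; have hk' : (k <= d1)%N by apply: leq_trans hid.
  by rewrite !h // (leq_trans (leq_pred k)).
have S2 : \sum_(i.+1 <= k < d1.+1) (g (x k.-1) (y k.-1) (x k) (y k) + g (x k.-1) (z k.-1) (x k) (z k)) =
          \sum_(i.+1 <= k < d1.+1) (g (x k.-1) (y' k.-1) (x k) (y' k) + g (x k.-1) (z k.-1) (x k) (z k)).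
  apply: eq_big_nat => k /andP[_ hk].
  by rewrite !h // (leq_trans (leq_pred k)).
by rewrite S1 S2 !h // (leq_trans (leq0n _)).
Qed.

Lemma Lg_locZ (x y z z' : nat -> E) : (i <= d1)%N -> (d1 - i <= d2)%N ->
  (forall k, (i <= k <= i + d2)%N -> z k = z' k) ->
  Lg g phi0 phi1 r0 r1 i d1 d2 x y z = Lg g phi0 phi1 r0 r1 i d1 d2 x y z'.
Proof.
move=> h1 h2 h; rewrite /Lg /=.
have hd : (d1 <= i + d2)%N by rewrite -leq_subLR.
have S2 : \sum_(i.+1 <= k < d1.+1) (g (x k.-1) (y k.-1) (x k) (y k) + g (x k.-1) (z k.-1) (x k) (z k)) =
          \sum_(i.+1 <= k < d1.+1) (g (x k.-1) (y k.-1) (x k) (y k) + g (x k.-1) (z' k.-1) (x k) (z' k)).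
  apply: eq_big_nat => k /andP[hk1 hk2].
  have hk : (k <= i + d2)%N by apply: leq_trans hd.
  rewrite !h // ?(ltnW hk1) ?hk ?(leq_trans (leq_pred k)) //.
  by rewrite -ltnS prednK ?hk1 // (leq_ltn_trans (leq0n i)).
have S3 : \sum_(d1.+1 <= k < (i + d2).+1) g (x k.-1) (z k.-1) (x k) (z k) =
          \sum_(d1.+1 <= k < (i + d2).+1) g (x k.-1) (z' k.-1) (x k) (z' k).
  apply: eq_big_nat => k /andP[hk1 hk2].
  have hik : (i < k)%N by apply: leq_ltn_trans hk1.
  rewrite !h // ?(ltnW hik) ?hk2 ?(leq_trans (leq_pred k)) //.
  by rewrite -ltnS prednK ?hik // (leq_ltn_trans (leq0n i)).
rewrite S2 S3 !h ?leqnn ?hd ?h1 ?leq_addr //.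
Qed.

Lemma part1 (mu1 mu2 mu3 : E -> R)
  (hm1 : \sum_e mu1 e = 1) (hm2 : \sum_e mu2 e = 1) (hm3 : \sum_e mu3 e = 1) N :
  (i <= d1)%N -> (d1 - i <= d2)%N -> (i + d2 <= N)%N ->
  expect3 N mu1 P mu2 Q mu3 Q (Lg g phi0 phi1 r0 r1 i d1 d2) = 1.
Proof.
move=> h1 h2 h3; rewrite /expect3.
rewrite -(markov3 hm1 hm2 hm3 hh_sum N).
apply: eq_bigr => x _; apply: eq_bigr => y _; apply: eq_bigr => z _.
by rewrite (@Lg_eq N).
Qed.

End Part1.

Section Part2Infra.
Variables (R : realType) (E : finType).

Definition bshift (i : nat) (w : nat -> E) : nat -> E := fun n => w (n - i)%N.

Lemma use2 (mu : E -> R) (A : E -> E -> R) (hA : forall e, \sum_e' A e e' = 1)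
  (hmu : forall t, \sum_s mu s * A s t = mu t)
  (H : (nat -> E) -> R) i d m N :
  (forall z z', (forall k, (i <= k <= i + d)%N -> z k = z' k) -> H z = H z') ->
  (d <= m)%N -> (m + i <= N)%N ->
  \sum_(w : {ffun 'I_m.+1 -> E}) path_prob mu A m (ext w) * H (bshift i (ext w)) =
  \sum_(z : {ffun 'I_N.+1 -> E}) path_prob mu A N (ext z) * H (ext z).
Proof.
move=> hH hdm hN.
have hloc : forall n, (i + d <= n)%N -> loc n H.
  move=> n hn z z' h; apply: hH => k /andP[_ hk]; apply: h; exact: leq_trans hn.
case: (posnP i) => [hi0|hi].
  subst i; rewrite (@ext_len R E mu A hA m H (hloc m _) N) ?add0n //; last by rewrite addn0 in hN.
  apply: eq_bigr => w _; congr (_ * _); apply: hH => k _; rewrite /bshift subn0 //.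
rewrite (@ext_len R E mu A hA (m + i)%N H (hloc (m + i)%N _) N) //; last by rewrite addnC leq_add2r.
transitivity (\sum_(z : {ffun 'I_(m + i).+1 -> E}) path_prob mu A (m + i) (ext z) *
   (fun y w => H (bshift i w)) (ext z) (shift i (ext z))); last first.
  apply: eq_bigr => z _; congr (_ * _); apply: hH => k /andP[hk _].
  by rewrite /bshift /shift subnK.
rewrite (@split_lem R E mu A 0 i hi m (fun y w => H (bshift i w))) //; last first.
  move=> y w w' h; apply: hH => k /andP[hk1 hk2]; rewrite /bshift h //.
  by rewrite leq_subLR (leq_trans hk2) // leq_add2l.
rewrite (@sum_ffun1 R E (fun u0 => path_prob mu A 0 u0 * \sum_(w : {ffun 'I_m.+1 -> E})
   path_prob (fun e => mpow A (i - 0) (u0 0%N) e) A m (ext w) * H (bshift i (ext w)))).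
symmetry; under eq_bigr do rewrite big_distrr /=.
rewrite exchange_big /=; apply: eq_bigr => w _.
transitivity ((\sum_e mu e * mpow A i e (ext w 0%N)) *
   (\prod_(k < m) A (ext w k) (ext w k.+1)) * H (bshift i (ext w))); last first.
  by rewrite mpow_stat.
rewrite !big_distrl /=; apply: eq_bigr => e _.
by rewrite /path_prob big_ord0 subn0; ring.
Qed.

End Part2Infra.

Section Part2.
Variables (R : realType) (E : finType).

Lemma mu_pos (mu : E -> R) (A : E -> E -> R) : stochastic A -> irreducible A ->
  stationary_distr mu A -> forall e, 0 < mu e.
Proof.
move=> hA hirr [h0 h1 h2] e.
have [s hs] := exists_pos h0 h1.
have [n _ hn] := hirr s e.
rewrite -(@mpow_stat R E mu A n e h2) (bigD1 s) //=.
rewrite ltr_wpDr //; last by rewrite mulr_gt0.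
apply: sumr_ge0 => t _; rewrite mulr_ge0 ?h0 ?mpow_ge0 //; exact: hA.1.
Qed.

Lemma mpow_le1 (A : E -> E -> R) n s t : stochastic A -> mpow A n s t <= 1.
Proof.
move=> hA; rewrite -(@mpow_sum1 R E A n s hA.2) (bigD1 t) //= lerDl.
by apply: sumr_ge0 => u _; apply: mpow_ge0; exact: hA.1.
Qed.

Lemma C_bound (mu : E -> R) (hmu : forall e, 0 < mu e) e :
  1 <= (\sum_b (mu b)^-1) * mu e.
Proof.
have h : (mu e)^-1 <= \sum_b (mu b)^-1.
  rewrite (bigD1 e) //= lerDl; apply: sumr_ge0 => b _.
  by rewrite invr_ge0 ltW.
rewrite -(mulVf (lt0r_neq0 (hmu e))); apply: ler_wpM2r => //; exact: ltW.
Qed.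

Lemma C_pos (mu : E -> R) (hmu : forall e, 0 < mu e) (e : E) : 0 < \sum_b (mu b)^-1.
Proof.
rewrite (bigD1 e) //= ltr_wpDr ?invr_gt0 //.
by apply: sumr_ge0 => b _; rewrite invr_ge0 ltW.
Qed.

Variables (P Q : E -> E -> R) (g : E -> E -> E -> E -> R) (phi0 phi1 : R)
  (r0 : E * E -> R) (r1 : E * E * E -> R).
Hypotheses (hP : stochastic P) (hQ : stochastic Q)
  (hr0 : pos_right_eigvec (Phi0 P Q g) phi0 r0)
  (hr1 : pos_right_eigvec (Phi1 P Q g) phi1 r1).
Variable e0 : E.
Variables (muY : E -> R) (C : R).
Hypotheses (hmuY : stationary_distr muY Q) (hC : forall e, 1 <= C * muY e).

Lemma part2_core (i d1 d2 T N : nat) (X : nat -> E) :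
  (i <= d1)%N -> (d1 - i <= d2)%N -> (1 <= T)%N -> (d1 + 1 <= i + T)%N ->
  (i + d2 + T <= N)%N ->
  \sum_(y : {ffun 'I_N.+1 -> E}) path_prob muY Q N (ext y) *
      Lg g phi0 phi1 r0 r1 i d1 d2 X (ext y) (shift T (ext y)) <=
  C * \sum_(y : {ffun 'I_N.+1 -> E}) path_prob muY Q N (ext y) *
      \sum_(z : {ffun 'I_N.+1 -> E}) path_prob muY Q N (ext z) *
         Lg g phi0 phi1 r0 r1 i d1 d2 X (ext y) (ext z).
Proof.
move=> h1 h2 hT hS hN.
have hdd : (d1 <= i + d2)%N by lia.
have [m hm] : exists m, N = (m + (i + T))%N by exists (N - (i + T))%N; lia.
have hdm : (d2 <= m)%N by lia.
subst N.
have hdS : (d1 < i + T)%N by lia.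
have hQr := hQ.2.
have [hm0 hm1 hm2] := hmuY.
pose F (y w : nat -> E) := Lg g phi0 phi1 r0 r1 i d1 d2 X y (bshift i w).
have eA : \sum_(y : {ffun 'I_(m + (i + T)).+1 -> E}) path_prob muY Q (m + (i + T)) (ext y) *
      Lg g phi0 phi1 r0 r1 i d1 d2 X (ext y) (shift T (ext y)) =
    \sum_(y : {ffun 'I_(m + (i + T)).+1 -> E}) path_prob muY Q (m + (i + T)) (ext y) *
      F (ext y) (shift (i + T) (ext y)).
  apply: eq_bigr => y _; congr (_ * _); rewrite /F; apply: Lg_locZ => // k /andP[hk1 hk2].
  rewrite /bshift /shift; congr (ext y _); lia.
rewrite eA (@split_lem R E muY Q d1 (i + T) hdS m F); last 2 first.
- by move=> y y' w h; rewrite /F; apply: Lg_locY.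
- move=> y w w' h; rewrite /F; apply: Lg_locZ => // k /andP[hk1 hk2].
  rewrite /bshift h //; lia.
pose H (y : nat -> E) := \sum_(z : {ffun 'I_(m + (i + T)).+1 -> E})
   path_prob muY Q (m + (i + T)) (ext z) * Lg g phi0 phi1 r0 r1 i d1 d2 X y (ext z).
have eF : \sum_(y : {ffun 'I_(m + (i + T)).+1 -> E}) path_prob muY Q (m + (i + T)) (ext y) * H (ext y) =
   \sum_(u : {ffun 'I_d1.+1 -> E}) path_prob muY Q d1 (ext u) * H (ext u).
  apply: ext_len => //; last by lia.
  move=> y y' h; rewrite /H; apply: eq_bigr => z _; congr (_ * _).
  exact: Lg_locY.
rewrite [X in _ <= C * X]eF big_distrr; apply: ler_sum => u _ /=.
rewrite mulrCA; apply: ler_wpM2l; first by apply: pp_ge0 => // e e'; exact: hQ.1.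
have eU : \sum_(w : {ffun 'I_m.+1 -> E}) path_prob muY Q m (ext w) *
      Lg g phi0 phi1 r0 r1 i d1 d2 X (ext u) (bshift i (ext w)) = H (ext u).
  rewrite /H; apply: (@use2 R E muY Q hQr hm2 _ i d2) => //; last by lia.
  by move=> z z' h; apply: Lg_locZ.
rewrite -eU big_distrr; apply: ler_sum => w _ /=.
rewrite /F /path_prob.
have hL := Lg_ge0 hP hQ hr0 hr1 e0 i d1 d2 X (ext u) (bshift i (ext w)).
have hpr : 0 <= \prod_(k < m) Q (ext w k) (ext w k.+1).
  by apply: prodr_ge0 => k _; exact: hQ.1.
rewrite -mulrA (_ : C * (muY (ext w 0%N) * \prod_(k < m) Q (ext w k) (ext w k.+1) *
   Lg g phi0 phi1 r0 r1 i d1 d2 X (ext u) (bshift i (ext w))) =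
   (C * muY (ext w 0%N)) * (\prod_(k < m) Q (ext w k) (ext w k.+1) *
   Lg g phi0 phi1 r0 r1 i d1 d2 X (ext u) (bshift i (ext w)))); last by ring.
apply: ler_wpM2r; first exact: mulr_ge0.
apply: le_trans (hC (ext w 0%N)); exact: mpow_le1.
Qed.

End Part2.

Theorem lemma5p2 (R : realType) (E : finType) (P Q : E -> E -> R)
  (P_stoch : stochastic P) (P_irr : irreducible P) (P_aper : aperiodic P)
  (Q_stoch : stochastic Q) (Q_irr : irreducible Q) (Q_aper : aperiodic Q)
  (muX muY muZ : E -> R)
  (muX_stat : stationary_distr muX P) (muY_stat : stationary_distr muY Q)
  (muZ_stat : stationary_distr muZ Q)
  (g : E -> E -> E -> E -> R)
  (phi0 phi1 : R) (r0 : E * E -> R) (r1 : E * E * E -> R)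
  (phi0_sr : is_spectral_radius (Phi0 P Q g) phi0)
  (phi1_sr : is_spectral_radius (Phi1 P Q g) phi1)
  (r0_eig : pos_right_eigvec (Phi0 P Q g) phi0 r0)
  (r1_eig : pos_right_eigvec (Phi1 P Q g) phi1 r1) :
  (forall i d1 d2 : nat, (i <= d1)%N -> (d1 - i <= d2)%N ->
     forall N : nat, (i + d2 <= N)%N ->
       expect3 N muX P muY Q muZ Q (Lg g phi0 phi1 r0 r1 i d1 d2) = 1)
  /\
  (exists rho : R, 0 < rho /\
     forall i d1 d2 T : nat, (i <= d1)%N -> (d1 - i <= d2)%N ->
       (1 <= T)%N -> (d1 + 1 <= i + T)%N ->
       forall N : nat, (i + d2 + T <= N)%N ->
         expect2 N muX P muY Q
           (fun x y => Lg g phi0 phi1 r0 r1 i d1 d2 x y (shift T y)) <= rho).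
Proof.
have [hX0 hX1 hX2] := muX_stat.
have [hY0 hY1 hY2] := muY_stat.
have [hZ0 hZ1 hZ2] := muZ_stat.
have [e0 _] := exists_pos hX0 hX1.
split.
  move=> i d1 d2 h1 h2 N hN.
  exact: (part1 P_stoch Q_stoch r0_eig r1_eig e0 hX1 hY1 hZ1 h1 h2 hN).
have hmu := mu_pos Q_stoch Q_irr muY_stat.
exists (\sum_b (muY b)^-1); split; first exact: C_pos hmu e0.
move=> i d1 d2 T h1 h2 hT hS N hN.
have hC := C_bound hmu.
set C := \sum_b (muY b)^-1 in hC *.
apply: (le_trans (y := C * expect3 N muX P muY Q muY Q (Lg g phi0 phi1 r0 r1 i d1 d2))); last first.
  rewrite (part1 P_stoch Q_stoch r0_eig r1_eig e0 hX1 hY1 hY1 h1 h2) ?mulr1 //; lia.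
rewrite /expect2 /expect3 big_distrr; apply: ler_sum => x _ /=.
have hpx : 0 <= path_prob muX P N (ext x) by apply: pp_ge0 => // e e'; exact: P_stoch.1.
have -> : \sum_(y : {ffun 'I_N.+1 -> E}) path_prob muX P N (ext x) * path_prob muY Q N (ext y) *
      Lg g phi0 phi1 r0 r1 i d1 d2 (ext x) (ext y) (shift T (ext y)) =
  path_prob muX P N (ext x) * \sum_(y : {ffun 'I_N.+1 -> E}) path_prob muY Q N (ext y) *
      Lg g phi0 phi1 r0 r1 i d1 d2 (ext x) (ext y) (shift T (ext y)).
  by rewrite big_distrr /=; apply: eq_bigr => y _; rewrite mulrA.
have -> : C * (\sum_(y : {ffun 'I_N.+1 -> E}) \sum_(z : {ffun 'I_N.+1 -> E})
    path_prob muX P N (ext x) * path_prob muY Q N (ext y) * path_prob muY Q N (ext z) *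
    Lg g phi0 phi1 r0 r1 i d1 d2 (ext x) (ext y) (ext z)) =
  path_prob muX P N (ext x) * (C * \sum_(y : {ffun 'I_N.+1 -> E}) path_prob muY Q N (ext y) *
      \sum_(z : {ffun 'I_N.+1 -> E}) path_prob muY Q N (ext z) *
         Lg g phi0 phi1 r0 r1 i d1 d2 (ext x) (ext y) (ext z)).
  rewrite mulrCA; congr (_ * _); rewrite big_distrr; apply: eq_bigr => y _ /=.
  rewrite !big_distrr; apply: eq_bigr => z _ /=; ring.
apply: ler_wpM2l => //.
exact: (part2_core P_stoch Q_stoch r0_eig r1_eig e0 muY_stat hC).
Qed.
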